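(* Let $\mathcal M_{int}$ be the set of triplets $(T,I,F)$ of nonempty intervals (open, half-open or closed) contained in $[0,1]$; write $T^L=\inf T$, $T^U=\sup T$, and similarly $I^L,I^U,F^L,F^U$. Define for $P=(T,I,F)\in\mathcal M_{int}$ $$s(P)=\frac{4+T^L+T^U-I^L-I^U-F^L-F^U}{6},\quad a(P)=\frac{T^L+T^U-F^L-F^U}{2},\quad c(P)=\frac{T^L+T^U}{2}.$$ Compare $P_1,P_2\in\mathcal M_{int}$ lexicographically by $(s,a,c)$: $P_1>P_2$ (resp. $P_1<P_2$) if $s(P_1)>s(P_2)$ (resp. $<$), or $s$ values are equal and $a(P_1)>a(P_2)$ (resp. $<$), or $s$ and $a$ values are equal and $c(P_1)>c(P_2)$ (resp. $<$). Then for any $P_1,P_2\in\mathcal M_{int}$, either $P_1>P_2$, or $P_1<P_2$, or $P_1$ and $P_2$ are neutrosophically equal, meaning $\frac{T_1^L+T_1^U}{2}=\frac{T_2^L+T_2^U}{2}$, $\frac{I_1^L+I_1^U}{2}=\frac{I_2^L+I_2^U}{2}$ and $\frac{F_1^L+F_1^U}{2}=\frac{F_2^L+F_2^U}{2}$ (the corresponding component intervals have the same midpoints). Thus $s,a,c$ determine a total order on $\mathcal M_{int}$ up to neutrosophic equality.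
   Context: $s,a,c$ are the paper's new interval neutrosophic score, accuracy and certainty functions; two intervals are called neutrosophically equal when they have the same midpoint. *)

(* Defs.v *)
From HB Require Import structures.
From mathcomp Require Import all_boot all_order all_algebra.
Set Implicit Arguments. Unset Strict Implicit. Unset Printing Implicit Defensive.
Import Order.TTheory GRing.Theory Num.Theory.
Local Open Scope ring_scope.

(* A real interval with finite endpoints lo <= hi (when nonempty) and
   closedness flags: lo_cl = true iff lo belongs to the interval (when
   nonempty), hi_cl = true iff hi belongs to it. *)
Record fitv (R : realFieldType) := MkFitv {
  lo : R; hi : R; lo_cl : bool; hi_cl : bool }.

(* The corresponding MathComp interval: closed left bound = BLeft = BSide true,
   closed right bound = BRight = BSide false. *)
Definition as_itv (R : realFieldType) (i : fitv R) : interval R :=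
  Interval (BSide (lo_cl i) (lo i)) (BSide (~~ hi_cl i) (hi i)).

Definition valid_itv (R : realFieldType) (i : fitv R) : Prop :=
  (exists x : R, x \in as_itv i) /\
  (forall x : R, x \in as_itv i -> 0 <= x <= 1).

(* For a nonempty interval, inf = lo and sup = hi. *)
Definition infI (R : realFieldType) (i : fitv R) : R := lo i.
Definition supI (R : realFieldType) (i : fitv R) : R := hi i.

Record ntrip (R : realFieldType) := MkNtrip {
  tT : fitv R; tI : fitv R; tF : fitv R }.

Definition in_Mint (R : realFieldType) (P : ntrip R) : Prop :=
  valid_itv (tT P) /\ valid_itv (tI P) /\ valid_itv (tF P).

Definition score (R : realFieldType) (P : ntrip R) : R :=
  (4 + infI (tT P) + supI (tT P) - infI (tI P) - supI (tI P)
     - infI (tF P) - supI (tF P)) / 6.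
Definition accuracy (R : realFieldType) (P : ntrip R) : R :=
  (infI (tT P) + supI (tT P) - infI (tF P) - supI (tF P)) / 2.
Definition certainty (R : realFieldType) (P : ntrip R) : R :=
  (infI (tT P) + supI (tT P)) / 2.

Definition ngt (R : realFieldType) (P1 P2 : ntrip R) : Prop :=
  score P1 > score P2 \/
  (score P1 = score P2 /\ accuracy P1 > accuracy P2) \/
  (score P1 = score P2 /\ accuracy P1 = accuracy P2 /\
   certainty P1 > certainty P2).

Definition nlt (R : realFieldType) (P1 P2 : ntrip R) : Prop :=
  score P1 < score P2 \/
  (score P1 = score P2 /\ accuracy P1 < accuracy P2) \/
  (score P1 = score P2 /\ accuracy P1 = accuracy P2 /\
   certainty P1 < certainty P2).

Definition midI (R : realFieldType) (i : fitv R) : R := (infI i + supI i) / 2.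

Definition neut_eq (R : realFieldType) (P1 P2 : ntrip R) : Prop :=
  midI (tT P1) = midI (tT P2) /\ midI (tI P1) = midI (tI P2) /\
  midI (tF P1) = midI (tF P2).

(* Main.v *)
Require Import Defs.
From HB Require Import structures.
From mathcomp Require Import all_boot all_order all_algebra.
From mathcomp Require Import lra.
Import Order.TTheory GRing.Theory Num.Theory.
Local Open Scope ring_scope.

Theorem theorem10p4 (R : realFieldType) (P1 P2 : ntrip R) :
  in_Mint P1 -> in_Mint P2 ->
  ngt P1 P2 \/ nlt P1 P2 \/ neut_eq P1 P2.
Proof.
move=> _ _; rewrite /ngt /nlt.
case: (ltgtP (score P1) (score P2)) => hs; [by right; left; left|by left; left|].
case: (ltgtP (accuracy P1) (accuracy P2)) => ha;
  [by right; left; right; left|by left; right; left|].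
case: (ltgtP (certainty P1) (certainty P2)) => hc;
  [by right; left; right; right|by left; right; right|].
right; right; move: hs ha hc.
rewrite /neut_eq /midI /score /accuracy /certainty.
move=> hs ha hc; split; [lra|split; lra].
Qed.
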